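(* Let $k\in\mathbb{Z}^+$, let $G:\mathbb{R}\to\mathbb{R}$, and for real weights $\psi_1,\psi_2,\nu,\beta_i,\phi_{i,1},\phi_{i,2},\mu_i$ ($i=1,\dots,k$) let $g(y,e)=\nu+\sum_{i=1}^{k}\beta_iG(\phi_{i,1}y+\phi_{i,2}e+\mu_i)$. Consider the Markov chain $(x_t)$ on $\mathbb{R}^2$ defined by $$x_t=\Psi x_{t-1}+F(x_{t-1})+\Sigma\,\varepsilon_t,$$ where $x_t=(y_t,e_t)'$, $\Sigma=(1,1)'$, $\Psi=\begin{bmatrix}\psi_1&\psi_2\\0&0\end{bmatrix}$, $F(y,e)=(g(y,e),0)'$, and $(\varepsilon_t)$ is an i.i.d. sequence of real random variables. Suppose the distribution of $\varepsilon_t$ is absolutely continuous with respect to Lebesgue measure $\lambda$, with density $\nu(\cdot)$ that is positive everywhere on $\mathbb{R}$ and lower semi-continuous everywhere. Suppose moreover that (a) $G\in C^\infty$ is bounded, nonconstant and asymptotically constant, and (b) $\psi_1+\psi_2\neq 0$. Then the Markov chain $(x_t)$ is irreducible on the state space $(\mathbb{R}^2,\mathcal{B})$, where $\mathcal{B}$ is the Borel $\sigma$-field.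
   Context: This chain is the state-space form of the PARNN$(1,k,1)$ process $y_t=\psi_1y_{t-1}+\psi_2e_{t-1}+g(y_{t-1},e_{t-1})+\varepsilon_t$. A Markov chain on $(\mathcal{X},\mathcal{B})$, $\mathcal{X}\subseteq\mathbb{R}^2$, is called irreducible if $\sum_{t=1}^{\infty}P^t(x,\mathcal{A})>0$ for all $x\in\mathcal{X}$ whenever $\lambda(\mathcal{A})>0$, where $P^t(x,\mathcal{A})$ is the $t$-step transition probability from $x$ to $\mathcal{A}\in\mathcal{B}$ and $\lambda$ is Lebesgue measure. *)

(* Defs.v *)
From HB Require Import structures.
From mathcomp Require Import all_boot all_order all_algebra.
From mathcomp Require Import all_classical all_reals all_analysis.
Set Implicit Arguments. Unset Strict Implicit. Unset Printing Implicit Defensive.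
Import Order.TTheory GRing.Theory Num.Theory.
Import numFieldNormedType.Exports.
Local Open Scope classical_set_scope.
Local Open Scope ring_scope.

Definition parnn_g (R : realType) (k : nat) (G : R -> R) (nu0 : R)
  (beta phi1 phi2 mu : 'I_k -> R) (y e : R) : R :=
  nu0 + \sum_(i < k) beta i * G (phi1 i * y + phi2 i * e + mu i).

(* One step of the state-space recursion x_t = Psi x_{t-1} + F(x_{t-1}) + Sigma eps_t,
   with x = (y, e), Psi = [[psi1, psi2], [0, 0]], F(y,e) = (g(y,e), 0)', Sigma = (1,1)'. *)
Definition parnn_step (R : realType) (k : nat) (G : R -> R) (psi1 psi2 nu0 : R)
  (beta phi1 phi2 mu : 'I_k -> R) (x : R * R) (eps : R) : R * R :=
  (psi1 * x.1 + psi2 * x.2 + parnn_g G nu0 beta phi1 phi2 mu x.1 x.2 + eps,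
   0 * x.1 + 0 * x.2 + 0 + eps).

Fixpoint transP (R : realType) (step : R * R -> R -> R * R) (dens : R -> R)
  (t : nat) (x : R * R) (A : set (R * R)) : \bar R :=
  match t with
  | O => (\1_A x)%:E
  | S t' => (\int[@lebesgue_measure R]_(eps in [set: R])
               (transP step dens t' (step x eps) A * (dens eps)%:E))%E
  end.

(* Irreducibility with respect to Lebesgue measure on R^2 (product of Lebesgue measures
   on the product sigma-algebra, which is the Borel sigma-field of R^2). *)
Definition lebesgue_irreducible (R : realType) (step : R * R -> R -> R * R)
  (dens : R -> R) : Prop :=
  forall A : set (R * R), measurable A ->
    ((@lebesgue_measure R \x @lebesgue_measure R) A > 0)%E ->
    forall x : R * R, exists t : nat, (0 < t)%N /\ (transP step dens t x A > 0)%E.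

Definition smooth (R : realType) (G : R -> R) : Prop :=
  forall (n : nat) (x : R), derivable (derive1n n G) x 1.

Definition nonconstant (R : realType) (G : R -> R) : Prop :=
  exists a b : R, G a <> G b.

Definition asymptotically_constant (R : realType) (G : R -> R) : Prop :=
  (exists l : R, G x @[x --> +oo] --> l) /\ (exists l : R, G x @[x --> -oo] --> l).

(* Main.v *)
Require Import Defs.
From HB Require Import structures.
From mathcomp Require Import all_boot all_order all_algebra.
From mathcomp Require Import all_classical all_reals all_analysis.
From mathcomp Require Import lra ring measurable_realfun.
Import Order.TTheory GRing.Theory Num.Theory.
Import numFieldNormedType.Exports.
Local Open Scope classical_set_scope.
Local Open Scope ring_scope.

Section S.
Context {R : realType}.
Notation wl := (@wlength R idfun).

Lemma wl_oc (a b : R) : a < b -> wl `]a, b] = (b - a)%:E.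
Proof. by move=> ab; rewrite wlength_itv /= lte_fin ab. Qed.

Lemma cover_piece (h : R -> R) (n : nat) (S : set R)
  (HS : forall x y, S x -> `|y - x| < n.+1%:R^-1 -> `|h y - h x| <= n%:R * `|y - x|)
  (A : set (ocitv_type R)) : measurable A -> (wl A < (n.+1%:R^-1)%:E)%E ->
  exists J : set (ocitv_type R), measurable J /\ (h @` (S `&` A) `<=` J) /\
     (wl J <= (2 * n + 1)%:R%:E * wl A)%E.
Proof.
move=> /ocitvP [->|[[a b] /= ab ->]] hl.
  exists set0; split => //; split.
    by move=> _ [x [_ []]].
  by rewrite wlength0 mule0.
have [[x0 [Sx0 Ax0]]|nx] := pselect (exists x, S x /\ `]a, b]%classic x).
  exists `]h x0 - n.+1%:R * (b - a), h x0 + n%:R * (b - a)]%classic; split.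
    exact: is_ocitv.
  split.
    move=> _ [y [Sy Ay] <-].
    move: Ax0 Ay; rewrite /= !in_itv /= => /andP[ax0 x0b] /andP[ay yb].
    have yx : `|y - x0| < b - a.
      rewrite ltr_norml; apply/andP; split; lra.
    move: hl; rewrite wl_oc // lte_fin => hl.
    have := HS x0 y Sx0 (lt_trans yx hl).
    have : n%:R * `|y - x0| <= n%:R * (b - a) by rewrite ler_wpM2l // ltW.
    move=> h1 h2.
    have h3 := le_trans h2 h1.
    move: h3; rewrite ler_norml => /andP[h3 h4].
    have ba : 0 < b - a by lra.
    have : 0 <= n%:R * (b - a) :> R by rewrite mulr_ge0 // ltW.
    move=> h5; apply/andP; split.
      have : n%:R * (b - a) < n.+1%:R * (b - a).
        by rewrite ltr_pM2r // ltr_nat.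
      lra.
    lra.
  rewrite wl_oc //; last first.
    have ba : 0 < b - a by lra.
    have : 0 <= n%:R * (b - a) :> R by rewrite mulr_ge0 // ltW.
    have : n%:R * (b - a) < n.+1%:R * (b - a) by rewrite ltr_pM2r // ltr_nat.
    lra.
  rewrite wl_oc // -EFinM lee_fin.
  rewrite natrD natrM -[n.+1]addn1 natrD; rewrite le_eqVlt; apply/orP; left; apply/eqP; ring.
exists set0; split => //; split.
  by move=> y [x [Sx Ax] _]; apply: nx; exists x.
by rewrite wlength0 mule_ge0 // ?lee_fin // wlength_ge0.
Qed.

Lemma term_le_series (u : nat -> \bar R) k : (forall i, (0 <= u i)%E) ->
  (u k <= \sum_(0 <= i <oo) u i)%E.
Proof.
move=> u0; apply: le_trans (nneseries_lim_ge k.+1 _) => //.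
rewrite big_nat_recr //= addeC leeDl //; exact: sume_ge0.
Qed.

Lemma null_image (h : R -> R)
  (hL : forall x, exists n : nat, forall y, `|y - x| < n.+1%:R^-1 ->
      `|h y - h x| <= n%:R * `|y - x|)
  (N : set R) : mu_ext wl N = 0%E -> mu_ext wl (h @` N) = 0%E.
Proof.
move=> HN.
pose S n := [set x | N x /\ forall y, `|y - x| < n.+1%:R^-1 ->
      `|h y - h x| <= n%:R * `|y - x|].
have NS : h @` N `<=` \bigcup_n (h @` S n).
  move=> _ [x Nx <-]; have [n Hn] := hL x.
  by exists n => //; exists x.
have key n : mu_ext wl (h @` S n) = 0%E.
  apply/eqP; rewrite eq_le mu_ext_ge0 ?andbT; last by move=> X; exact: wlength_ge0.
  apply/lee_addgt0Pr => e e0; rewrite add0e.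
  have c0 : 0 < (2 * n + 1)%:R :> R by rewrite ltr0n addn1.
  pose eps := Num.min (e / (2 * n + 1)%:R) (n.+1%:R^-1).
  have eps0 : 0 < eps by rewrite lt_min divr_gt0 // invr_gt0 ltr0n.
  have fin0 : mu_ext wl N \is a fin_num by rewrite HN.
  have [_ [A [mA NA] <-]] := lb_ereal_inf_adherent eps0 fin0.
  rewrite -/(mu_ext wl N) HN add0e => hA.
  have hlA k : (wl (A k) < (n.+1%:R^-1)%:E)%E.
    apply: (le_lt_trans (term_le_series (fun i => wl (A i)) k _)).
      by move=> i; exact: wlength_ge0.
    by apply: lt_le_trans hA _; rewrite lee_fin ge_min lexx orbT.
  have : forall k, exists J : set (ocitv_type R), measurable J /\
      (h @` (S n `&` A k) `<=` J) /\
      (wl J <= (2 * n + 1)%:R%:E * wl (A k))%E.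
    move=> k; apply: cover_piece => //.
    by move=> x y [_ Hx]; exact: Hx.
  move=> /choice [J HJ].
  apply: (@le_trans _ _ (\sum_(0 <= k <oo) wl (J k))%E).
    apply: ereal_inf_lbound; exists J => //; split.
      by move=> k; have [] := HJ k.
    move=> _ [x Sx <-]; have [k _ Akx] := NA x Sx.1.
    exists k => //; have [_ [HJk _]] := HJ k; apply: HJk.
    by exists x.
  apply: (@le_trans _ _ (\sum_(0 <= k <oo) ((2 * n + 1)%:R%:E * wl (A k)))%E).
    apply: lee_nneseries; first by move=> i _ _; exact: wlength_ge0.
    by move=> k _; have [_ []] := HJ k.
  rewrite nneseriesZl; last by move=> i _; exact: wlength_ge0.
  apply: (@le_trans _ _ ((2 * n + 1)%:R%:E * eps%:E)%E).
    by rewrite lee_pmul2l ?lte_fin // ltW.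
  rewrite -EFinM lee_fin -ler_pdivlMl //.
  by rewrite mulrC ge_min lexx.
apply/eqP; rewrite eq_le mu_ext_ge0 ?andbT; last by move=> X; exact: wlength_ge0.
have H1 := @le_mu_ext _ _ _ wl _ _ NS.
apply: (le_trans H1).
apply: (le_trans (mu_ext_sigma_subadditive _ _)).
  by move=> X; exact: wlength_ge0.
by rewrite eseries0.
Qed.
End S.
Section S2.
Context {R : realType}.

Definition LL (f : R -> R) (x : R) := exists2 M : R, 0 <= M &
  exists2 d : R, 0 < d & forall y, `|y - x| < d -> `|f y - f x| <= M * `|y - x|.

Lemma der_LL (f : R -> R) x : derivable f x 1 -> LL f x.
Proof.
move=> H.
have /cvgrPdist_lt /(_ 1 ltr01) := H.
set l := lim _.
rewrite /dnbhs /within /= => /nbhs_ballP [d d0 Hd].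
exists (`|l| + 1); first by rewrite addr_ge0.
exists d => // y yx.
have [->|yx0] := eqVneq y x; first by rewrite !subrr !normr0 mulr0.
have t0 : y - x != 0 by rewrite subr_eq0.
have := Hd (y - x); rewrite /ball /= sub0r normrN => /(_ yx t0).
rewrite /GRing.scale /= mulr1 subrK.
move=> h1.
have h2 : `|(y - x)^-1 *: (f y - f x)| <= `|l| + 1.
  have := ler_normB l (l - (y - x)^-1 *: (f y - f x)).
  rewrite opprB addrC subrK. lra.
have : `|f y - f x| = `|y - x| * `|(y - x)^-1 *: (f y - f x)|.
  by rewrite -normrM /GRing.scale /= mulrA divff // mul1r.
move=> ->; rewrite mulrC ler_wpM2r //.
Qed.

Lemma LL_ext (f g : R -> R) x : (forall u, f u = g u) -> LL f x -> LL g x.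
Proof.
move=> fg [M M0 [d d0 H]]; exists M => //; exists d => // y yx.
by rewrite -!fg; exact: H.
Qed.

Lemma LL_cst (c : R) x : LL (fun _ => c) x.
Proof.
exists 0 => //; exists 1 => // y _; by rewrite subrr normr0 mul0r.
Qed.

Lemma LL_add (f g : R -> R) x : LL f x -> LL g x -> LL (fun u => f u + g u) x.
Proof.
move=> [M M0 [d d0 H]] [M' M0' [d' d0' H']].
exists (M + M'); first by rewrite addr_ge0.
exists (Num.min d d'); first by rewrite lt_min d0 d0'.
move=> y; rewrite lt_min => /andP[yd yd'].
have -> : f y + g y - (f x + g x) = (f y - f x) + (g y - g x) by ring.
apply: le_trans (ler_normD _ _) _.
rewrite mulrDl; apply: lerD; [exact: H | exact: H'].
Qed.

Lemma LL_scale (c : R) (f : R -> R) x : LL f x -> LL (fun u => c * f u) x.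
Proof.
move=> [M M0 [d d0 H]]; exists (`|c| * M); first by rewrite mulr_ge0.
exists d => // y yd.
rewrite -mulrBr normrM -mulrA ler_wpM2l //; exact: H.
Qed.

Lemma LL_affine (a b : R) x : LL (fun u => a * u + b) x.
Proof.
exists `|a| => //; exists 1 => // y _.
have -> : a * y + b - (a * x + b) = a * (y - x) by ring.
by rewrite normrM.
Qed.

Lemma LL_comp_affine (G : R -> R) (a b : R) x :
  LL G (a * x + b) -> LL (fun u => G (a * u + b)) x.
Proof.
move=> [M M0 [d d0 H]].
exists (M * `|a|); first by rewrite mulr_ge0.
exists (d / (`|a| + 1)); first by rewrite divr_gt0 // ltr_pwDr.
move=> y yd.
have e : a * y + b - (a * x + b) = a * (y - x) by ring.
have : `|a * y + b - (a * x + b)| < d.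
  rewrite e normrM.
  have : `|a| * `|y - x| <= (`|a| + 1) * `|y - x|.
    by rewrite ler_wpM2r // lerDl.
  move=> h1; apply: le_lt_trans h1 _.
  by rewrite mulrC -ltr_pdivlMr // ltr_pwDr.
move=> /H; rewrite e normrM mulrA; exact.
Qed.

Lemma LL_sum k (F : 'I_k -> R -> R) x : (forall i, LL (F i) x) ->
  LL (fun u => \sum_(i < k) F i u) x.
Proof.
move=> HF.
suff : forall s : seq 'I_k, LL (fun u => \sum_(i <- s) F i u) x.
  by move=> /(_ (index_enum 'I_k)); apply: LL_ext.
elim => [|i s IH].
  by apply: (@LL_ext (fun _ => 0)); [move=> u; rewrite big_nil | exact: LL_cst].
apply: (@LL_ext (fun u => F i u + \sum_(j <- s) F j u)).
  by move=> u; rewrite big_cons.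
exact: LL_add.
Qed.

Lemma LL_nat {f : R -> R} {x} : LL f x -> exists n : nat, forall y,
  `|y - x| < n.+1%:R^-1 -> `|f y - f x| <= n%:R * `|y - x|.
Proof.
move=> [M M0 [d d0 H]].
exists (Num.truncn (M + d^-1)).+1 => y yx.
have h1 : M + d^-1 < (Num.truncn (M + d^-1)).+1%:R by exact: truncnS_gt.
have hn : M <= (Num.truncn (M + d^-1)).+1%:R.
  have : 0 < d^-1 by rewrite invr_gt0.
  lra.
have hd : `|y - x| < d.
  apply: lt_le_trans yx _.
  rewrite invf_ple ?posrE ?ltr0n //.
  have : (Num.truncn (M + d^-1)).+1%:R <= (Num.truncn (M + d^-1)).+2%:R :> R.
    by rewrite ler_nat.
  lra.
apply: le_trans (H y hd) _.
by rewrite ler_wpM2r.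
Qed.

Lemma LL_cont (f : R -> R) : (forall x, LL f x) -> continuous f.
Proof.
move=> Hf x; have [M M0 [d d0 H]] := Hf x.
apply/cvgrPdist_lt => e e0.
apply/nbhs_ballP; exists (Num.min d (e / (M + 1))).
  by rewrite /= lt_min d0 divr_gt0 // ltr_pwDr.
move=> y; rewrite /ball /= lt_min => /andP[yd ye].
rewrite distrC in yd ye.
have := H y yd; rewrite distrC => h1.
apply: le_lt_trans h1 _.
have : `|y - x| * M <= `|y - x| * (M + 1).
  by rewrite ler_wpM2l // lerDl.
move=> h2; rewrite mulrC; apply: le_lt_trans h2 _.
by rewrite -ltr_pdivlMr // ltr_pwDr.
Qed.

Lemma surj_lem (q : R -> R) (s M : R) : continuous q -> s != 0 ->
  (forall u, `|q u - s * u| <= M) -> forall w, exists u, q u = w.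
Proof.
move=> qc s0 qM w.
pose u1 := (w + M + 1) / s; pose u2 := (w - M - 1) / s.
have h1 : w < q u1.
  have := qM u1; rewrite ler_norml => /andP[h _].
  have : s * u1 = w + M + 1 by rewrite /u1 mulrC divfK.
  lra.
have h2 : q u2 < w.
  have := qM u2; rewrite ler_norml => /andP[_ h].
  have : s * u2 = w - M - 1 by rewrite /u2 mulrC divfK.
  lra.
have qc' a b : {within `[a, b], continuous q} by exact: continuous_subspaceT.
have [le12|lt21] := leP u1 u2.
  have H : Num.min (q u1) (q u2) <= w <= Num.max (q u1) (q u2).
    by rewrite ge_min le_max (ltW h1) (ltW h2) !orbT.
  by have [c _ <-] := IVT le12 (qc' _ _) H; exists c.
have H : Num.min (q u2) (q u1) <= w <= Num.max (q u2) (q u1).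
  by rewrite ge_min le_max (ltW h1) (ltW h2) !orbT.
by have [c _ <-] := IVT (ltW lt21) (qc' _ _) H; exists c.
Qed.
End S2.
Section P.
Context d (T : measurableType d) (R : realType) (mu : {measure set T -> \bar R}).
Local Open Scope ereal_scope.

Lemma pos_int (f : T -> \bar R) (S : set T) : measurable_fun [set: T] f ->
  (forall x, 0 <= f x) -> measurable S -> 0 < mu S ->
  (forall x, S x -> 0 < f x) -> 0 < \int[mu]_x f x.
Proof.
move=> mf f0 mS muS fS.
rewrite lt0e integral_ge0 // andbT; apply/negP => /eqP I0.
have : \int[mu]_(x in setT) `|f x| = 0.
  by rewrite -I0; apply: eq_integral => x _; rewrite gee0_abs.
move=> /(ae_eq_integral_abs mu measurableT mf) [N [mN N0 HN]].
move: muS; rewrite lt0e => /andP[/negP + _]; apply.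
rewrite eq_le measure_ge0 andbT -N0; apply: le_measure; rewrite ?inE //.
move=> x Sx; apply: HN => /= H; have := fS x Sx; rewrite H //.
by rewrite ltxx.
Qed.

Lemma int_pos_set (f : T -> \bar R) : measurable_fun [set: T] f ->
  (forall x, 0 <= f x) -> 0 < \int[mu]_x f x -> 0 < mu [set x | 0 < f x].
Proof.
move=> mf f0 I0.
have mS : measurable [set x | 0 < f x].
  by rewrite -[X in measurable X]setTI; exact: emeasurable_fun_o_infty.
rewrite lt0e measure_ge0 andbT; apply/negP => /eqP S0.
move: I0; rewrite (ge0_negligible_integral _ _ _ _ S0) //.
rewrite (eq_integral (fun _ => 0)); first by rewrite integral0 ltxx.
move=> x; rewrite inE => -[_ /= Hx]; apply/eqP; rewrite eq_le f0 andbT.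
by rewrite leNgt; apply/negP.
Qed.
End P.

Section Pre.
Context {R : realType}.

Lemma lebE (X : set R) : @lebesgue_measure R X = mu_ext (@wlength R idfun) X.
Proof. by []. Qed.

Lemma preim_pos (q : R -> R) : (forall x, LL q x) -> (forall w, exists u, q u = w) ->
  forall B : set R, (0 < @lebesgue_measure R B)%E ->
  (0 < @lebesgue_measure R (q @^-1` B))%E.
Proof.
move=> qL qs B; rewrite !lebE !lt0e !mu_ext_ge0 ?andbT; try by move=> X; exact: wlength_ge0.
apply: contra => /eqP H0.
have H1 := @null_image R q (fun x => LL_nat (qL x)) _ H0.

rewrite eq_le mu_ext_ge0 ?andbT; last by move=> X; exact: wlength_ge0.
rewrite -H1; apply: le_mu_ext => w Bw.
by have [u quw] := qs w; exists u => //; rewrite /preimage /= quw.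
Qed.
End Pre.

Theorem theorem1 (R : realType) (k : nat) (hk : (0 < k)%N) (G : R -> R)
  (psi1 psi2 nu0 : R) (beta phi1 phi2 mu : 'I_k -> R) (dens : R -> R)
  (dens_meas : measurable_fun [set: R] dens)
  (dens_int : (\int[@lebesgue_measure R]_(x in [set: R]) (dens x)%:E = 1)%E)
  (dens_pos : forall x, 0 < dens x)
  (dens_lsc : lower_semicontinuous (fun x : R => (dens x)%:E))
  (G_smooth : smooth G) (G_bounded : bounded_fun G) (G_noncst : nonconstant G)
  (G_asym : asymptotically_constant G)
  (hpsi : psi1 + psi2 != 0) :
  lebesgue_irreducible (parnn_step G psi1 psi2 nu0 beta phi1 phi2 mu) dens.
Proof.
move=> A mA hA x; exists 2%N; split => //.
set step := parnn_step _ _ _ _ _ _ _ _.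
pose g' := parnn_g G nu0 beta phi1 phi2 mu.
pose hf e1 := psi1 * (step x e1).1 + psi2 * (step x e1).2 + g' (step x e1).1 (step x e1).2.
have stepE e1 e2 : step (step x e1) e2 = (hf e1 + e2, e2).
  rewrite /hf /step /parnn_step /=; congr pair; by rewrite !mul0r !add0r.
pose a := psi1 * x.1 + psi2 * x.2 + g' x.1 x.2.
have hfE u : hf u = (psi1 * u + psi1 * a) + (psi2 * u + 0) +
    (nu0 + \sum_(i < k) beta i * G ((phi1 i + phi2 i) * u + (phi1 i * a + mu i))).
  rewrite /hf /step /parnn_step /g' /parnn_g /= !mul0r !add0r.
  rewrite -/(parnn_g G nu0 beta phi1 phi2 mu x.1 x.2) -/g' -/a addr0.
  rewrite (eq_bigr (fun i => beta i * G ((phi1 i + phi2 i) * u + (phi1 i * a + mu i)))); first ring.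
  move=> i _; congr (_ * G _); ring.
have GL z : LL G z by apply: der_LL; exact: (G_smooth 0%N z).
have hfL u : LL hf u.
  apply: LL_ext (fun u => esym (hfE u)) _.
  apply: LL_add; first by apply: LL_add; exact: LL_affine.
  apply: LL_add; first exact: LL_cst.
  apply: LL_sum => i; apply: LL_scale; apply: LL_comp_affine; exact: GL.
have [MG HG] : exists MG, forall z, `|G z| <= MG.
  move: G_bounded => [M0 [_ HM]].
  exists (M0 + 1) => z; apply: (HM (M0 + 1)) => //.
  by rewrite ltrDl.
have qL e2 u : LL (fun u => hf u + e2) u by apply: LL_add (hfL u) (LL_cst _ _).
have qsurj e2 : forall w, exists u, hf u + e2 = w.
  apply: (@surj_lem R (fun u => hf u + e2) (psi1 + psi2)
     (`|psi1 * a + nu0| + \sum_(i < k) `|beta i| * MG + `|e2|)).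
  - by apply: LL_cont => u; exact: qL.
  - exact: hpsi.
  move=> u; rewrite hfE; set Sg := \sum_(i < k) _.
  have -> : psi1 * u + psi1 * a + (psi2 * u + 0) + (nu0 + Sg) + e2 - (psi1 + psi2) * u
     = (psi1 * a + nu0) + Sg + e2 by ring.
  apply: le_trans (ler_normD _ _) _; apply: lerD => //.
  apply: le_trans (ler_normD _ _) _; apply: lerD => //.
  apply: le_trans (ler_norm_sum _ _ _) _; apply: ler_sum => i _.
  by rewrite normrM ler_wpM2l.
have hfc : continuous hf by apply: LL_cont.
pose Phi := fun p : R * R => (hf p.1 + p.2, p.2).
have mPhi : measurable_fun setT Phi.
  apply: measurable_fun_pair; last exact: measurable_snd.
  apply: measurable_funD; last exact: measurable_snd.
  apply: measurableT_comp; [exact: continuous_measurable_fun | exact: measurable_fst].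
pose E := Phi @^-1` A.
have mE : measurable E by rewrite -[E]setTI; exact: mPhi.
pose F1 := fun p : R * R => (\1_E p * dens p.2)%:E.
pose F := fun p : R * R => (\1_E p * dens p.2 * dens p.1)%:E.
have mF1 : measurable_fun setT F1.
  apply/measurable_EFinP; apply: measurable_funM; first exact: measurable_indic.
  by apply: measurableT_comp; [exact: dens_meas | exact: measurable_snd].
have mF : measurable_fun setT F.
  apply/measurable_EFinP; apply: measurable_funM; last first.
    by apply: measurableT_comp; [exact: dens_meas | exact: measurable_fst].
  apply: measurable_funM; first exact: measurable_indic.
  by apply: measurableT_comp; [exact: dens_meas | exact: measurable_snd].
have dens0 z : 0 <= dens z by apply: ltW.
have F10 p : (0 <= F1 p)%E by rewrite lee_fin mulr_ge0.
have F0 p : (0 <= F p)%E by rewrite lee_fin !mulr_ge0.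
rewrite /=.
have inner e1 : ((\int[lebesgue_measure]_e2 ((\1_A (step (step x e1) e2))%:E * (dens e2)%:E)) * (dens e1)%:E
   = \int[lebesgue_measure]_e2 F (e1, e2))%E.
  rewrite (eq_integral (fun e2 : measurableTypeR R => F1 (e1, e2))); last first.
    by move=> e2 _; rewrite stepE /F1 EFinM.
  rewrite -ge0_integralZr //; last by rewrite lee_fin.
  exact: measurable_fun_pair2 mF1.
under eq_integral => e1 _ do rewrite inner.
rewrite (@fubini_tonelli _ _ _ _ _ (@lebesgue_measure R) (@lebesgue_measure R) F mF F0).
have mGf := @measurable_fun_fubini_tonelli_G _ _ _ _ _ (@lebesgue_measure R) F mF F0.
pose S2 := [set e2 : measurableTypeR R | (0 < (@lebesgue_measure R) (ysection A e2))%E].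
have mS2 : measurable S2.
  rewrite -[S2]setTI; apply: emeasurable_fun_o_infty => //.
  exact: (measurable_fun_ysection (@lebesgue_measure R) mA).
have hAy : (((@lebesgue_measure R) \x (@lebesgue_measure R)) A = \int[(@lebesgue_measure R)]_y (@lebesgue_measure R) (ysection A y))%E.
  rewrite /product_measure1 -(@indic_fubini_tonelli_FE _ _ (measurableTypeR R) (measurableTypeR R) R (@lebesgue_measure R) A mA).
  rewrite (@indic_fubini_tonelli _ _ (measurableTypeR R) (measurableTypeR R) R (@lebesgue_measure R) (@lebesgue_measure R) A mA).
  by rewrite (@indic_fubini_tonelli_GE _ _ (measurableTypeR R) (measurableTypeR R) R (@lebesgue_measure R) A mA).
have S2pos : (0 < (@lebesgue_measure R) S2)%E.
  apply: (@int_pos_set _ _ _ (@lebesgue_measure R) ((@lebesgue_measure R) \o ysection A)).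
  - exact: (measurable_fun_ysection (@lebesgue_measure R) mA).
  - by move=> y; exact: measure_ge0.
  - by rewrite -hAy.
apply: (@pos_int _ _ _ (@lebesgue_measure R) _ S2) => //.
- by move=> y; apply: integral_ge0 => e1 _; exact: F0.
move=> e2 He2.
have YE : ysection E e2 = (fun e1 => hf e1 + e2) @^-1` (ysection A e2).
  by rewrite /ysection /E /preimage /Phi /=.
apply: (@pos_int _ _ _ (@lebesgue_measure R) _ (ysection E e2)) => //.
- exact: measurable_fun_pair1 mF.
- exact: measurable_ysection.
- by rewrite YE; apply: preim_pos => //; try exact: qL; try exact: qsurj.
move=> e1; rewrite /ysection /= inE => He1.
by rewrite /F indicE (@mem_set _ E (e1, e2) He1) mul1r lte_fin mulr_gt0.
Qed.
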